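(* Let $n\ge1$, $\phi^{\mathrm{imp}}\in\mathbb R^{n\times n}$ and $g\in\mathbb R^{n\times n}$ be arbitrary, and define $\phi^+,\phi,g^+,g^{\mathrm{imp}}$ by the projection and gradient processing oracles in the context. Then $\phi\in\mathcal S(n)$ and for every $\phi^*\in\mathcal S(n)$, $$\langle g,\phi-\phi^*\rangle\le\langle g^{\mathrm{imp}},\phi^{\mathrm{imp}}-\phi^*\rangle.$$
   Context: $\mathcal S(n)$ is the set of $n\times n$ right stochastic matrices; matrix inner product $\langle x,y\rangle=\sum_{i,j}x_{i,j}y_{i,j}$; subscript $i$ on a matrix denotes its $i$-th row, and $\mathbf 1$ is the all-ones vector. Projection oracle: $\phi^+_{i,j}=\max\{\phi^{\mathrm{imp}}_{i,j},0\}$; then $\phi_i=\phi^+_i/\|\phi^+_i\|_1$ if $\|\phi^+_i\|_1>0$ and $\phi_i=(1/n,\dots,1/n)$ otherwise. Gradient processing oracle: $g^+_i=g_i-\langle g_i,\phi_i\rangle\mathbf 1$ for each row $i$; then $g^{\mathrm{imp}}_{i,j}=g^+_{i,j}$ if $\phi^{\mathrm{imp}}_{i,j}\ge0$ (equivalently $\phi^+_{i,j}=\phi^{\mathrm{imp}}_{i,j}$), and $g^{\mathrm{imp}}_{i,j}=\min\{g^+_{i,j},0\}$ otherwise. *)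

(* Defs.v *)
From mathcomp Require Import all_boot all_order all_algebra.
Set Implicit Arguments. Unset Strict Implicit. Unset Printing Implicit Defensive.
Import Order.TTheory GRing.Theory Num.Theory.
Local Open Scope ring_scope.

Section Defs.
Variables (R : realFieldType) (n : nat).

Definition mx_inner (x y : 'M[R]_n) : R := \sum_(i < n) \sum_(j < n) x i j * y i j.

Definition row_inner (x y : 'M[R]_n) (i : 'I_n) : R := \sum_(j < n) x i j * y i j.

Definition right_stochastic (x : 'M[R]_n) : Prop :=
  (forall i j, 0 <= x i j) /\ (forall i, \sum_(j < n) x i j = 1).

Definition phi_plus (phi_imp : 'M[R]_n) : 'M[R]_n :=
  \matrix_(i, j) Num.max (phi_imp i j) 0.

Definition proj_oracle (phi_imp : 'M[R]_n) : 'M[R]_n :=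
  \matrix_(i, j)
    let s := \sum_(k < n) `|phi_plus phi_imp i k| in
    if 0 < s then phi_plus phi_imp i j / s else n%:R^-1.

Definition g_plus (phi_imp g : 'M[R]_n) : 'M[R]_n :=
  \matrix_(i, j) (g i j - row_inner g (proj_oracle phi_imp) i).

Definition grad_oracle (phi_imp g : 'M[R]_n) : 'M[R]_n :=
  \matrix_(i, j)
    if 0 <= phi_imp i j then g_plus phi_imp g i j
    else Num.min (g_plus phi_imp g i j) 0.

End Defs.

(* Main.v *)
Require Import Defs.
From mathcomp Require Import all_boot all_order all_algebra.
From mathcomp Require Import ring lra.
Import Order.TTheory GRing.Theory Num.Theory.
Local Open Scope ring_scope.

Section S.
Variables (R : realFieldType) (n : nat) (hn : (0 < n)%N) (phi_imp g : 'M[R]_n).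

Let m i j := Num.max (phi_imp i j) 0.
Let s i := \sum_(k < n) m i k.

Lemma m_ge0 i j : 0 <= m i j.
Proof. by rewrite /m le_max lexx orbT. Qed.

Lemma s_ge0 i : 0 <= s i.
Proof. by apply: sumr_ge0 => k _; apply: m_ge0. Qed.

Lemma P_E i j : proj_oracle phi_imp i j = if 0 < s i then m i j / s i else n%:R^-1.
Proof.
rewrite /proj_oracle mxE /=.
have -> : \sum_(k < n) `|phi_plus phi_imp i k| = s i.
  by apply: eq_bigr => k _; rewrite /phi_plus mxE ger0_norm // -/(m i k) m_ge0.
by rewrite /phi_plus mxE.
Qed.

Lemma s0_m i : ~~ (0 < s i) -> forall j, m i j = 0.
Proof.
move=> h j.
have s0 : s i = 0 by apply/eqP; rewrite eq_le (s_ge0 i) andbT -leNgt in h *.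
have := (psumr_eq0P (P := predT) (F := m i) (fun k _ => m_ge0 i k)).
by move/(_ s0 j isT).
Qed.

Lemma P_ge0 i j : 0 <= proj_oracle phi_imp i j.
Proof.
rewrite P_E; case: ifP => h.
  by apply: divr_ge0; [apply: m_ge0|apply: ltW].
by rewrite invr_ge0 ler0n.
Qed.

Lemma P_sum i : \sum_(j < n) proj_oracle phi_imp i j = 1.
Proof.
have [h|h] := boolP (0 < s i); under eq_bigr => j _ do rewrite (P_E i j) ?h ?(negbTE h).
  by rewrite -mulr_suml -/(s i) mulfV // gt_eqF.
rewrite sumr_const card_ord -[_ *+ n]mulr_natr mulVf //.
by rewrite pnatr_eq0 -lt0n.
Qed.

Lemma C_zero i : \sum_(j < n) g_plus phi_imp g i j * m i j = 0.
Proof.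
have [h|h] := boolP (0 < s i); last first.
  by apply: big1 => j _; rewrite (s0_m i h j) mulr0.
under eq_bigr => j _ do rewrite /g_plus mxE mulrBl.
rewrite sumrB -mulr_sumr -/(s i) /row_inner.
have : forall j, m i j = proj_oracle phi_imp i j * s i.
  by move=> j; rewrite P_E h divfK // gt_eqF.
move=> E.
under eq_bigr => j _ do rewrite E mulrA.
rewrite -mulr_suml.
rewrite mulrC; apply/eqP; rewrite subr_eq0; apply/eqP; congr (_ * _).
Qed.


Lemma row_ineq i (q : 'I_n -> R) (hq0 : forall j, 0 <= q j) (hq1 : \sum_j q j = 1) :
  \sum_j g i j * (proj_oracle phi_imp i j - q j) <=
  \sum_j grad_oracle phi_imp g i j * (phi_imp i j - q j).
Proof.
have -> : \sum_j g i j * (proj_oracle phi_imp i j - q j) =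
   \sum_j (g_plus phi_imp g i j * m i j - g_plus phi_imp g i j * q j).
  rewrite sumrB C_zero sub0r.
  under [in RHS]eq_bigr => j _ do rewrite /g_plus mxE mulrBl.
  rewrite sumrB -mulr_sumr hq1 mulr1 opprB.
  under eq_bigr => j _ do rewrite mulrBr.
  by rewrite sumrB /row_inner.
apply: ler_sum => j _.
rewrite /grad_oracle mxE /m.
set gp := g_plus phi_imp g i j.
have := hq0 j.
case: ifP => ha hq.
  by rewrite max_l // mulrBr.
have ha' : phi_imp i j < 0 by rewrite ltNge ha.
rewrite (max_r (ltW ha')) mulr0 sub0r.
case/orP: (le_total gp 0) => hg.
  rewrite (min_l hg); nra.
rewrite (min_r hg); nra.
Qed.

End S.

Theorem lemma6 (R : realFieldType) (n : nat) (hn : (0 < n)%N)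
  (phi_imp g : 'M[R]_n) :
  right_stochastic (proj_oracle phi_imp) /\
  (forall phi_star : 'M[R]_n, right_stochastic phi_star ->
     mx_inner g (proj_oracle phi_imp - phi_star)
       <= mx_inner (grad_oracle phi_imp g) (phi_imp - phi_star)).
Proof.
split.
  split; [exact: P_ge0 | exact: P_sum].
move=> q [hq0 hq1].
rewrite /mx_inner; apply: ler_sum => i _.
have := @row_ineq R n phi_imp g i (q i) (hq0 i) (hq1 i).
have subE : forall (A B : 'M[R]_n) j, (A - B) i j = A i j - B i j.
  by move=> A B j; rewrite !mxE.
move=> H; apply: le_trans (le_trans _ H) _; rewrite le_eqVlt; apply/orP; left; apply/eqP; apply: eq_bigr => j _; by rewrite subE.
Qed.
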